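(* Let $(M,d)$ be a compact metric space and $\varphi:M\to M$ continuous. For all $\mathbb P\in\mathcal P_\varphi(M)$ and $\mathcal G=\{G_n\}\in\mathcal A(M)$, the limit $\mathcal G(\mathbb P)=\lim_{n\to\infty}n^{-1}\int G_n\,d\mathbb P$ exists and is finite, and for any approximating sequence $\{G^{(k)}\}$ of $\mathcal G$, $\mathcal G(\mathbb P)=\lim_{k\to\infty}\int G^{(k)}d\mathbb P$. Both convergences are uniform in $\mathbb P\in\mathcal P_\varphi(M)$, and $\mathbb P\mapsto\mathcal G(\mathbb P)$ is continuous on $\mathcal P_\varphi(M)$ with the weak topology.
   Context: $C(M),B(M)$: continuous/bounded Borel real functions with sup norm; $\mathcal P_\varphi(M)$: $\varphi$-invariant Borel probability measures; $S_nG=\sum_{k<n}G\circ\varphi^k$. $\mathcal A(M)$ is the set of $\{G_n\}\subset B(M)$ for which there is $\{G^{(k)}\}\subset C(M)$ (an approximating sequence) with $\lim_k\limsup_nn^{-1}\|G_n-S_nG^{(k)}\|_\infty=0$. *)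

(* Defs.v *)
From mathcomp Require Import all_boot all_order all_algebra.
From mathcomp Require Import all_classical all_reals all_analysis.
Set Implicit Arguments. Unset Strict Implicit. Unset Printing Implicit Defensive.
Import Order.TTheory GRing.Theory Num.Theory.
Import numFieldNormedType.Exports.
Local Open Scope classical_set_scope.
Local Open Scope ring_scope.

Notation borelM M := (g_sigma_algebraType (@open M)).

Definition birkhoff (R : realType) (M : Type) (phi : M -> M) (n : nat)
  (G : M -> R) : M -> R :=
  fun x => \sum_(k < n) G (iter k phi x).

Definition supnorm (R : realType) (M : Type) (f : M -> R) : R :=
  sup [set `|f x| | x in [set: M]].

Definition bounded_borel (R : realType) (M : pseudoPMetricType R) (f : M -> R) :=
  measurable_fun [set: borelM M] (f : borelM M -> R) /\
  exists c : R, forall x, `|f x| <= c.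

Definition phi_invariant (R : realType) (M : pseudoPMetricType R) (phi : M -> M)
  (P : probability (borelM M) R) :=
  forall A : set (borelM M), measurable A -> P (phi @^-1` A) = P A.

Definition approximating (R : realType) (M : pseudoPMetricType R) (phi : M -> M)
  (G : nat -> M -> R) (Gk : nat -> M -> R) :=
  (forall k, continuous (Gk k)) /\
  (fun k => limn_esup (fun n =>
     ((n%:R)^-1 * supnorm (G n \- birkhoff phi n (Gk k)))%:E)) @ \oo --> 0%E.

Definition in_A (R : realType) (M : pseudoPMetricType R) (phi : M -> M)
  (G : nat -> M -> R) :=
  (forall n, bounded_borel (G n)) /\ exists Gk, approximating phi G Gk.

Definition integ (R : realType) (M : pseudoPMetricType R)
  (P : probability (borelM M) R) (f : M -> R) : R :=
  Rintegral P [set: borelM M] (f : borelM M -> R).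

(* Continuity at P0 of F restricted to P_phi(M), for the weak topology:
   basic weak neighbourhoods of P0 are
   {Q : |int f_i dQ - int f_i dP0| < delta, i < m} with f_i in C(M). *)
Definition weakly_continuous_at (R : realType) (M : pseudoPMetricType R)
  (phi : M -> M) (F : probability (borelM M) R -> R)
  (P0 : probability (borelM M) R) :=
  forall eps : R, 0 < eps ->
  exists (m : nat) (fs : 'I_m -> M -> R) (delta : R),
    0 < delta /\ (forall i, continuous (fs i)) /\
    forall Q : probability (borelM M) R, phi_invariant phi Q ->
      (forall i, `|integ Q (fs i) - integ P0 (fs i)| < delta) ->
      `|F Q - F P0| < eps.

(* Main.v *)
Require Import Defs.
From mathcomp Require Import all_boot all_order all_algebra.
From mathcomp Require Import all_classical all_reals all_analysis.
From mathcomp Require Import measurable_realfun.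
From mathcomp Require Import lra.
Import Order.TTheory GRing.Theory Num.Theory.
Import numFieldNormedType.Exports.
Local Open Scope classical_set_scope.
Local Open Scope ring_scope.
Section S.
Variables (R : realType) (M : pseudoPMetricType R) (phi : M -> M).
Hypothesis cphi : continuous phi.
Hypothesis cM : compact [set: M].

Lemma cont_meas (f : M -> R) : continuous f ->
  measurable_fun [set: borelM M] (f : borelM M -> R).
Proof.
move=> /continuousP cf.
apply: (measurability _ (RGenOpens.measurableE R)).
move=> _ [_ [a [b ->] <-]]; rewrite setTI.
apply: sub_sigma_algebra; apply: cf; exact: interval_open.
Qed.

Lemma mphi : measurable_fun [set: borelM M] (phi : borelM M -> borelM M).
Proof.
move: cphi => /continuousP cf.
apply: (@measurability _ _ (borelM M) (borelM M) _ _ (@open M)) => //.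
move=> _ [A oA <-]; rewrite setTI.
apply: sub_sigma_algebra; exact: cf.
Qed.

Lemma bb_cont (f : M -> R) : continuous f -> bounded_borel f.
Proof.
move=> cf; split; first exact: cont_meas.
have : compact (f @` [set: M]).
  apply: continuous_compact => //; exact: continuous_subspaceT.
move=> /compact_bounded [c [_ hc]].
exists (`|c| + 1) => x; apply: (hc (`|c| + 1)).
  by rewrite (le_lt_trans (ler_norm c))// ltrDl.
by exists x.
Qed.

Lemma bbB (f g : M -> R) : bounded_borel f -> bounded_borel g -> bounded_borel (f \- g).
Proof.
move=> [mf [a ha]] [mg [b hb]]; split; first exact: measurable_funB.
exists (a + b) => x; rewrite /= (le_trans (ler_normB _ _))//; exact: lerD.
Qed.

Lemma bbD (f g : M -> R) : bounded_borel f -> bounded_borel g -> bounded_borel (f \+ g).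
Proof.
move=> [mf [a ha]] [mg [b hb]]; split; first exact: measurable_funD.
exists (a + b) => x; rewrite /= (le_trans (ler_normD _ _))//; exact: lerD.
Qed.

Lemma bb_phi (f : M -> R) : bounded_borel f -> bounded_borel (f \o phi).
Proof.
move=> [mf [a ha]]; split; last by exists a => x; exact: ha.
exact: (measurableT_comp mf mphi).
Qed.

Lemma bb_iter k (f : M -> R) : bounded_borel f -> bounded_borel (fun x => f (iter k phi x)).
Proof.
move=> bf; elim: k => [//|k ih].
have -> : (fun x => f (iter k.+1 phi x)) = (fun x => f (iter k phi x)) \o phi.
  by apply: funext => x /=; rewrite -iterSr.
exact: bb_phi.
Qed.

Lemma birkS n (f : M -> R) : birkhoff phi n.+1 f = birkhoff phi n f \+ (fun x => f (iter n phi x)).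
Proof. by apply: funext => x; rewrite /birkhoff /= big_ord_recr. Qed.

Lemma bb_birk n (f : M -> R) : bounded_borel f -> bounded_borel (birkhoff phi n f).
Proof.
move=> bf; elim: n => [|n ih].
  have -> : birkhoff phi 0 f = fun=> 0 by apply: funext => x; rewrite /birkhoff big_ord0.
  by split; [exact: measurable_cst | exists 0 => x; rewrite normr0].
by rewrite birkS; apply: bbD => //; exact: bb_iter.
Qed.

Variable P : probability (borelM M) R.
Hypothesis hP : phi_invariant phi P.

Lemma bb_int (f : M -> R) : bounded_borel f ->
  P.-integrable [set: borelM M] (EFin \o (f : borelM M -> R)).
Proof.
move=> [mf [c hc]]; apply: measurable_bounded_integrable => //.
  idtac.
  by apply: (le_lt_trans (probability_le1 P measurableT)); rewrite ltry.
exists c; split; first exact: num_real.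
by move=> y cy x _; rewrite /= (le_trans (hc x))// (ltW cy).
Qed.

Lemma int_phi (f : M -> R) : bounded_borel f ->
  integ P (f \o phi) = integ P f.
Proof.
move=> bf; have [mf _] := bf.
have mf' : measurable_fun [set: borelM M] (EFin \o (f : borelM M -> R)).
  exact/measurable_EFinP.
have intf : P.-integrable (phi @^-1` [set: borelM M]) ((EFin \o (f : borelM M -> R)) \o phi).
  rewrite preimage_setT; exact (bb_int _ (bb_phi f bf)).
have E := @integral_pushforward _ _ (borelM M) (borelM M) R phi mphi P setT
  (EFin \o f) mf' intf measurableT.
rewrite preimage_setT in E.
rewrite /integ /Rintegral; congr fine.
have -> : (\int[P]_(x in [set: borelM M]) ((f \o phi) x)%:E =
          \int[P]_(x in [set: borelM M]) ((EFin \o f) \o phi) x)%E by [].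
rewrite -E; apply: eq_measure_integral; first exact: mphi.
by move=> mp A mA _ /=; rewrite /pushforward hP.
Qed.


Lemma int_iter k (f : M -> R) : bounded_borel f ->
  integ P (fun x => f (iter k phi x)) = integ P f.
Proof.
move=> bf; elim: k => [//|k ih].
have -> : (fun x => f (iter k.+1 phi x)) = (fun x => f (iter k phi x)) \o phi.
  by apply: funext => x /=; rewrite -iterSr.
by rewrite int_phi //; exact: bb_iter.
Qed.

Lemma int0 : integ P (fun=> 0) = 0.
Proof. by rewrite /integ Rintegral_cst // mul0r. Qed.

Lemma int_birk n (f : M -> R) : bounded_borel f ->
  integ P (birkhoff phi n f) = n%:R * integ P f.
Proof.
move=> bf; elim: n => [|n ih].
  have -> : birkhoff phi 0 f = fun=> 0 by apply: funext => x; rewrite /birkhoff big_ord0.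
  by rewrite int0 mul0r.
rewrite birkS /integ RintegralD //; last 2 first.
- exact: bb_int (bb_birk n f bf).
- exact: bb_int (bb_iter n f bf).
rewrite -/(integ P _) -/(integ P _) ih int_iter // -addn1 natrD mulrDl mul1r.
done.
Qed.

Lemma int_le_sup (f : M -> R) : bounded_borel f -> `|integ P f| <= supnorm f.
Proof.
move=> bf; have [mf [c hc]] := bf.
have ub : forall x, `|f x| <= supnorm f.
  move=> x; apply: sup_ubound; last by exists x.
  by exists c => _ [y _ <-]; exact: hc.

rewrite /integ; apply: le_trans; first exact: le_normr_Rintegral (bb_int f bf).
apply: le_trans.
  apply: (@le_Rintegral _ _ _ P _ _ (fun=> supnorm f)) => //.
  - exact: integrable_norm (bb_int f bf).
  - apply: bb_int; split; first exact: measurable_cst.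
    by exists `|supnorm f|.
rewrite Rintegral_cst // [X in fine X](_ : _ = 1%E) ?mulr1 //; exact (probability_setT P).
Qed.


Lemma core n (Gn g : M -> R) : (0 < n)%N -> bounded_borel Gn -> bounded_borel g ->
  `|n%:R^-1 * integ P Gn - integ P g| <= n%:R^-1 * supnorm (Gn \- birkhoff phi n g).
Proof.
move=> n0 bG bg.
have e : integ P g = n%:R^-1 * integ P (birkhoff phi n g).
  by rewrite int_birk // mulrA mulVf ?mul1r // pnatr_eq0 -lt0n.
rewrite e -mulrBr /integ -RintegralB //; last 2 first.
- exact: bb_int.
- exact: bb_int (bb_birk n g bg).
rewrite normrM ger0_norm ?invr_ge0 ?ler0n //; apply: ler_wpM2l; first by rewrite invr_ge0 ler0n.
exact: (int_le_sup _ (bbB _ _ bG (bb_birk n g bg))).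
Qed.

End S.

Lemma unif (R : realType) (M : pseudoPMetricType R) (phi : M -> M)
  (G : nat -> M -> R) (Gk : nat -> M -> R) :
  continuous phi -> compact [set: M] -> (forall n, bounded_borel (G n)) ->
  approximating phi G Gk ->
  forall eps, 0 < eps -> exists K, forall k, (K <= k)%N -> exists N, forall n, (N <= n)%N ->
  forall P : probability (borelM M) R, phi_invariant phi P ->
  `|n%:R^-1 * integ P (G n) - integ P (Gk k)| < eps.
Proof.
move=> cphi cM bG [cG lim0] eps e0.
have : \forall k \near \oo, (limn_esup (fun n =>
   ((n%:R)^-1 * supnorm (G n \- birkhoff phi n (Gk k)))%:E) < eps%:E)%E.
  have H : nbhs (0%E : \bar R) [set y | (y < eps%:E)%E].
    apply: open_nbhs_nbhs; split; first exact: open_ereal_lt_ereal.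
    by rewrite /= lte_fin.
  exact: (lim0 _ H).
move=> [K _ HK]; exists K => k Kk.
have := HK k Kk.
rewrite /limn_esup /limf_esup => /ereal_inf_lt [_ [V [N _ HN] <-]] hlt.
exists N.+1 => n Nn P hP.
have n0 : (0 < n)%N by apply: leq_ltn_trans (leq0n N) Nn.
apply: le_lt_trans (core _ _ _ cphi _ hP _ _ _ n0 (bG n) (bb_cont _ _ cM _ (cG k))) _.
rewrite -lte_fin; apply: le_lt_trans hlt; apply: ereal_sup_ubound; exists n => //.
by apply: HN; exact: ltnW.
Qed.

Lemma lim_close (R : realType) (u : nat -> R) b e :
  cvgn u -> (exists N, forall n, (N <= n)%N -> `|u n - b| < e) -> `|limn u - b| <= e.
Proof.
move=> cu [N hN]; rewrite ler_distl; apply/andP; split.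
- apply: limr_ge => //; exists N => // n Nn.
  by have := hN n Nn; rewrite ltr_distl => /andP[/ltW].
- apply: limr_le => //; exists N => // n Nn.
  by have := hN n Nn; rewrite ltr_distl => /andP[_ /ltW].
Qed.

Lemma cvg_of (R : realType) (u : nat -> R) :
  (forall e, 0 < e -> exists b N, forall n, (N <= n)%N -> `|u n - b| < e) -> cvgn u.
Proof.
move=> H; apply: cauchy_cvg; apply: cauchy_exP => e e0.
have [b [N hN]] := H e e0; exists b; exists N => // n Nn.
by rewrite /= -ball_normE /ball_ /= distrC; exact: hN.
Qed.

Lemma tri3 (R : realFieldType) (a b c d e : R) :
  `|a - b| < e / 3 -> `|a - c| < e / 3 -> `|b - d| < e / 3 -> `|c - d| < e.
Proof.
rewrite !ltr_distl => /andP[h1 h2] /andP[h3 h4] /andP[h5 h6].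
apply/andP; split; lra.
Qed.

Theorem lemma2p3 (R : realType) (M : pseudoPMetricType R) (phi : M -> M)
  (G : nat -> M -> R) :
  hausdorff_space M -> compact [set: M] -> continuous phi ->
  in_A phi G ->
  exists GP : probability (borelM M) R -> R,
    (* n^{-1} int G_n dP -> GP P, uniformly in P in P_phi(M) *)
    (forall eps : R, 0 < eps -> exists N : nat, forall n : nat, (N <= n)%N ->
       forall P : probability (borelM M) R, phi_invariant phi P ->
         `|(n%:R)^-1 * integ P (G n) - GP P| < eps) /\
    (* for any approximating sequence, int G^(k) dP -> GP P uniformly *)
    (forall Gk : nat -> M -> R, approximating phi G Gk ->
     forall eps : R, 0 < eps -> exists K : nat, forall k : nat, (K <= k)%N ->
       forall P : probability (borelM M) R, phi_invariant phi P ->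
         `|integ P (Gk k) - GP P| < eps) /\
    (* P |-> GP P is continuous on P_phi(M) for the weak topology *)
    (forall P0 : probability (borelM M) R, phi_invariant phi P0 ->
       weakly_continuous_at phi GP P0).
Proof.
move=> _ cM cphi [bG [Gk0 ap0]].
pose u (P : probability (borelM M) R) n := n%:R^-1 * integ P (G n).
have cvgP : forall P, phi_invariant phi P -> cvgn (u P).
  move=> P hP; apply: cvg_of => e e0.
  have [K HK] := unif _ _ _ _ _ cphi cM bG ap0 _ e0.
  have [N HN] := HK K (leqnn K).
  by exists (integ P (Gk0 K)), N => n Nn; exact: HN.
have C2 : forall Gk, approximating phi G Gk -> forall eps, 0 < eps ->
    exists K, forall k, (K <= k)%N -> forall P, phi_invariant phi P ->
    `|integ P (Gk k) - limn (u P)| < eps.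
  move=> Gk ap eps e0.
  have e2 : 0 < eps / 2 by rewrite divr_gt0.
  have [K HK] := unif _ _ _ _ _ cphi cM bG ap _ e2.
  exists K => k Kk P hP; have [N HN] := HK k Kk.
  have h2 := lim_close _ _ _ _ (cvgP P hP) (ex_intro _ N (fun m Nm => HN m Nm P hP)).
  move: h2; rewrite ler_distl ltr_distl => /andP[h3 h4]; apply/andP; split; lra.
exists (fun P => limn (u P)); split; last split.
- move=> eps e0.
  have e2 : 0 < eps / 2 by rewrite divr_gt0.
  have [K HK] := unif _ _ _ _ _ cphi cM bG ap0 _ e2.
  have [N HN] := HK K (leqnn K).
  exists N => n Nn P hP.
  have h1 := HN n Nn P hP.
  have h2 := lim_close _ _ _ _ (cvgP P hP) (ex_intro _ N (fun m Nm => HN m Nm P hP)).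
  move: h1 h2; rewrite ler_distl !ltr_distl => /andP[h3 h4] /andP[h5 h6].
  apply/andP; split; rewrite /u in h5 h6 *; lra.
- exact: C2.
- move=> P0 hP0 eps e0.
  have e3 : 0 < eps / 3 by rewrite divr_gt0.
  have [K HK] := C2 Gk0 ap0 _ e3.
  exists 1%N, (fun _ => Gk0 K), (eps / 3); split => //; split.
    by move=> _; exact: ap0.1 K.
  move=> Q hQ hi.
  exact: (tri3 _ _ _ _ _ _ (hi ord0) (HK K (leqnn K) Q hQ) (HK K (leqnn K) P0 hP0)).
Qed.
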